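(* There is an absolute constant $c>0$ such that the following holds for all sufficiently large $n$. Let $L_1,\dots,L_n\colon\mathbb{F}_2^m\to\mathbb{F}_2$ be polynomials of degree at most $1$ and let $\mathcal{L}=(L_1,\dots,L_n)$ be the distribution on $\{0,1\}^n$ of $(L_1(X),\dots,L_n(X))$ for $X$ uniform on $\mathbb{F}_2^m$. Then \[ \|\mathcal{L}-\mathrm{Ber}(1/3)^{\otimes n}\|_{\mathtt{TV}}\ \ge\ 1-2^{-cn}. \]
   Context: $\mathrm{Ber}(1/3)^{\otimes n}$ is the product of $n$ independent Bernoulli$(1/3)$ bits. The total variation distance is $\|\mathcal{D}_1-\mathcal{D}_2\|_{\mathtt{TV}}=\frac12\sum_x|\mathcal{D}_1(x)-\mathcal{D}_2(x)|$. *)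

(* Defs.v *)
From HB Require Import structures.
From mathcomp Require Import Rstruct.
From mathcomp Require Import all_boot all_order all_algebra.
From mathcomp Require Import reals exp.
Set Implicit Arguments. Unset Strict Implicit. Unset Printing Implicit Defensive.
Import Order.TTheory GRing.Theory Num.Theory.
Local Open Scope ring_scope.

Definition realR : realType := Rdefinitions.R.

Definition affine_map (m : nat) (a : 'rV['F_2]_m) (b : 'F_2)
  (x : 'rV['F_2]_m) : 'F_2 := b + \sum_(j < m) a 0 j * x 0 j.

Definition lin_distr (n m : nat) (a : 'I_n -> 'rV['F_2]_m) (b : 'I_n -> 'F_2)
  (y : 'rV['F_2]_n) : realR :=
  #|[set x : 'rV['F_2]_m | [forall i, affine_map (a i) (b i) x == y 0 i]]|%:R
  / #|{: 'rV['F_2]_m}|%:R.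

Definition ber_prod (n : nat) (p : realR) (y : 'rV['F_2]_n) : realR :=
  \prod_(i < n) (if y 0 i == 1 then p else 1 - p).

Definition tv_dist (T : finType) (D1 D2 : T -> realR) : realR :=
  2^-1 * \sum_(x : T) `|D1 x - D2 x|.
Arguments ber_prod n p y : clear implicits.

(* Main.v *)
Require Import Defs.
From HB Require Import structures.
From mathcomp Require Import Rstruct.
From mathcomp Require Import all_boot all_order all_algebra.
From mathcomp Require Import reals exp.
From mathcomp Require Import ring lra.
Import Order.TTheory GRing.Theory Num.Theory.
Set Implicit Arguments. Unset Strict Implicit. Unset Printing Implicit Defensive.
Local Open Scope ring_scope.

Lemma F2_addK (z : 'F_2) : z + z = 0.
Proof. by case: z => [[|[|//]] ?]; apply/eqP. Qed.

Lemma F2_neq (u v : 'F_2) : (u != v) = (u == v + 1).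
Proof. by case: u => [[|[|//]] ?]; case: v => [[|[|//]] ?]. Qed.

Lemma affineD m (a : 'rV['F_2]_m) b x u v :
  affine_map a b (x + (u + v)) = affine_map a b x + affine_map a b u + affine_map a b v.
Proof.
rewrite /affine_map.
have -> : \sum_(j < m) a 0 j * (x + (u + v)) 0 j =
   \sum_(j < m) a 0 j * x 0 j + \sum_(j < m) a 0 j * u 0 j + \sum_(j < m) a 0 j * v 0 j.
  by rewrite -!big_split /=; apply: eq_bigr => j _; rewrite !mxE; ring.
have Hb : b = b + b + b by rewrite F2_addK add0r.
rewrite [X in X + _ = _]Hb; ring.
Qed.

Definition Cset n m (a : 'I_n -> 'rV['F_2]_m) (b : 'I_n -> 'F_2) (k : nat)
  (y : 'rV['F_2]_n) : {set 'rV['F_2]_m} :=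
  [set x | [forall j : 'I_n, (j < k)%N ==> (affine_map (a j) (b j) x == y 0 j)]].

Definition pr (v : 'F_2) : realR := if v == 1 then 3^-1 else 1 - 3^-1.

Definition mu n (k : nat) (y : 'rV['F_2]_n) : realR :=
  \prod_(j < n | (j < k)%N) pr (y 0 j).

Definition flp n (i : 'I_n) (y : 'rV['F_2]_n) : 'rV['F_2]_n := y + delta_mx 0 i.

Lemma flpE n (i : 'I_n) y j : flp i y 0 j = y 0 j + (j == i)%:R.
Proof. by rewrite /flp !mxE eqxx. Qed.

Lemma forall_step n k (hk : (k < n)%N) (P : 'I_n -> bool) :
  [forall j : 'I_n, (j < k.+1)%N ==> P j] =
  [forall j : 'I_n, (j < k)%N ==> P j] && P (Ordinal hk).
Proof.
apply/forallP/andP.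
  move=> H; split; last by have := H (Ordinal hk); rewrite /= ltnSn.
  by apply/forallP => j; apply/implyP => hj; apply: (implyP (H j)); apply: ltnW.
case=> /forallP H1 H2 j; apply/implyP; rewrite ltnS leq_eqVlt; case/orP => [/eqP e|lt].
  by have -> : j = Ordinal hk by apply: val_inj.
exact: (implyP (H1 j)).
Qed.

Lemma Cset_step n m (a : 'I_n -> 'rV['F_2]_m) b k (hk : (k < n)%N) y :
  Cset a b k.+1 y = Cset a b k y :&: [set x | affine_map (a (Ordinal hk)) (b (Ordinal hk)) x == y 0 (Ordinal hk)].
Proof. by apply/setP => x; rewrite !inE (forall_step hk). Qed.

Lemma Cset_stepf n m (a : 'I_n -> 'rV['F_2]_m) b k (hk : (k < n)%N) y :
  Cset a b k.+1 (flp (Ordinal hk) y) = Cset a b k y :\: [set x | affine_map (a (Ordinal hk)) (b (Ordinal hk)) x == y 0 (Ordinal hk)].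
Proof.
apply/setP => x; rewrite !inE (forall_step hk) andbC flpE eqxx F2_neq; congr andb.
apply: eq_forallb => j; case: (ltnP j k) => hj //=.
rewrite flpE; have -> : (j == Ordinal hk) = false.
  by apply/negbTE; apply/eqP => e; rewrite e /= ltnn in hj.
by rewrite addr0.
Qed.

Lemma mu_step n k (hk : (k < n)%N) y :
  mu k.+1 y = mu k y * pr (y 0 (Ordinal hk)).
Proof.
rewrite /mu (bigD1 (Ordinal hk)) //= mulrC; congr (_ * _).
apply: eq_bigl => j; rewrite ltnS leq_eqVlt -(inj_eq val_inj) /=.
by case: (ltngtP j k).
Qed.

Lemma mu_stepf n k (hk : (k < n)%N) y :
  mu k.+1 (flp (Ordinal hk) y) = mu k y * pr (y 0 (Ordinal hk) + 1).
Proof.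
rewrite mu_step flpE eqxx; congr (_ * _).
apply: eq_bigr => j hj; rewrite flpE; have -> : (j == Ordinal hk) = false.
  by apply/negbTE; apply/eqP => e; rewrite e /= ltnn in hj.
by rewrite addr0.
Qed.


Lemma dichot (T : finType) (A B : {set T}) :
  (forall x0 x1, x0 \in A :&: B -> x1 \in A :\: B ->
     exists tau : T -> T, injective tau /\
       (forall x, x \in A :&: B -> tau x \in A :\: B) /\
       (forall x, x \in A :\: B -> tau x \in A :&: B)) ->
  #|A :&: B| = 0%N \/ #|A :\: B| = 0%N \/ #|A :&: B| = #|A :\: B|.
Proof.
move=> H.
case: (set_0Vmem (A :&: B)) => [->|[x0 h0]]; first by left; rewrite cards0.
case: (set_0Vmem (A :\: B)) => [->|[x1 h1]]; first by right; left; rewrite cards0.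
right; right; have [t [ti [t1 t2]]] := H x0 x1 h0 h1.
apply/eqP; rewrite eqn_leq; apply/andP; split.
  rewrite -(card_imset _ ti); apply: subset_leq_card; apply/subsetP => z /imsetP [x hx ->]; exact: t1.
rewrite -(card_imset _ ti); apply: subset_leq_card; apply/subsetP => z /imsetP [x hx ->]; exact: t2.
Qed.

Lemma F2_add1 (u v : 'F_2) : (u + 1 == v) = (u != v).
Proof. by case: u => [[|[|//]] ?]; case: v => [[|[|//]] ?]. Qed.

Lemma count_dichot n m (a : 'I_n -> 'rV['F_2]_m) b k (hk : (k < n)%N) (y : 'rV['F_2]_n)
  (B := [set x | affine_map (a (Ordinal hk)) (b (Ordinal hk)) x == y 0 (Ordinal hk)]) :
  let A := Cset a b k y in
  #|A :&: B| = 0%N \/ #|A :\: B| = 0%N \/ #|A :&: B| = #|A :\: B|.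
Proof.
move=> A; apply: dichot => x0 x1 h0 h1.
set i := Ordinal hk.
have key : forall x, x \in A -> x + (x0 + x1) \in A /\ (x + (x0 + x1) \in B) = (x \notin B).
  move: h0 h1; rewrite /A /Cset !inE => /andP [/forallP A0 B0] /andP [B1 /forallP A1] x.
  rewrite /A /Cset inE => /forallP Ax; split.
    rewrite inE; apply/forallP => j; apply/implyP => hj.
    rewrite affineD (eqP (implyP (Ax j) hj)) (eqP (implyP (A0 j) hj)) (eqP (implyP (A1 j) hj)).
    by rewrite F2_addK add0r.
  rewrite /B !inE affineD (eqP B0); move: B1; rewrite F2_neq => /eqP ->.
  by rewrite addrA -(addrA _ (y 0 _) (y 0 _)) F2_addK addr0 F2_add1.
exists (fun x => x + (x0 + x1)); split; first exact: addIr.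
split => x.
  by rewrite in_setI => /andP [hA hB]; have [k1 k2] := key x hA; rewrite in_setD k1 k2 hB.
by rewrite in_setD => /andP [hB hA]; have [k1 k2] := key x hA; rewrite in_setI k1 k2 hB.
Qed.


Definition rho : realR := 99/100.

Lemma sq_bounds :
  Num.sqrt (3^-1 : realR) <= 578/1000 /\ Num.sqrt (1 - 3^-1 : realR) <= 817/1000 /\
  1414/1000 <= Num.sqrt (2 : realR).
Proof.
have h1 := sqr_sqrtr (_ : 0 <= (3^-1 : realR)).
have h2 := sqr_sqrtr (_ : 0 <= (1 - 3^-1 : realR)).
have h3 := sqr_sqrtr (_ : 0 <= (2 : realR)).
have g1 := sqrtr_ge0 (3^-1 : realR).
have g2 := sqrtr_ge0 (1 - 3^-1 : realR).
have g3 := sqrtr_ge0 (2 : realR).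
have t : (3^-1 : realR) = 1/3 by rewrite div1r.
have e0 : 0 <= (3^-1 : realR) by rewrite invr_ge0.
have e1 : 0 <= (1 - 3^-1 : realR) by rewrite t; lra.
move: (h1 e0) (h2 e1) (h3 (ler0n _ 2)) => {}h1 {}h2 {}h3.
split; first nra. split; nra.
Qed.

Lemma bracket (c0 c1 : nat) (t p0 p1 : realR) : 0 <= t ->
  (c0 = 0%N \/ c1 = 0%N \/ c0 = c1) ->
  ((p0 = 3^-1 /\ p1 = 1 - 3^-1) \/ (p0 = 1 - 3^-1 /\ p1 = 3^-1)) ->
  Num.sqrt (c0%:R * t * p0) + Num.sqrt (c1%:R * t * p1) <= rho * Num.sqrt ((c0 + c1)%:R * t).
Proof.
move=> t0 hc hp.
have [s1 [s2 s3]] := sq_bounds.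
have g1 := sqrtr_ge0 (3^-1 : realR).
have g2 := sqrtr_ge0 (1 - 3^-1 : realR).
have sp : Num.sqrt p0 <= rho /\ Num.sqrt p1 <= rho.
  by rewrite /rho; case: hp => [[-> ->]|[-> ->]]; split; lra.
have gc : forall c : nat, 0 <= c%:R * t by move=> c; apply: mulr_ge0.
have st := sqrtr_ge0 t.
case: hc => [->|[->|->]].
- rewrite mul0r mul0r sqrtr0 add0r add0n sqrtrM // mulrC ler_wpM2r //; first exact: sqrtr_ge0.
  by case: sp.
- rewrite mul0r mul0r sqrtr0 addr0 addn0 sqrtrM // mulrC ler_wpM2r //; first exact: sqrtr_ge0.
  by case: sp.
- set c := c1.
  rewrite (_ : (c + c)%:R * t = (c%:R * t) * 2); last by rewrite natrD; ring.
  have hs := gc c; set s := c%:R * t.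
  rewrite !sqrtrM //.
  have g3 := sqrtr_ge0 (2 : realR).
  have gs := sqrtr_ge0 s.
  have : Num.sqrt p0 + Num.sqrt p1 <= rho * Num.sqrt 2.
    by rewrite /rho; case: hp => [[-> ->]|[-> ->]]; lra.
  move=> h; rewrite -mulrDr mulrCA; apply: ler_wpM2l h; apply: mulr_ge0; exact: sqrtr_ge0.
Qed.


Lemma sum_flp n (i : 'I_n) (h : 'rV['F_2]_n -> realR) :
  \sum_y h y = 2^-1 * \sum_y (h y + h (flp i y)).
Proof.
rewrite big_split /=.
have -> : \sum_y h (flp i y) = \sum_y h y.
  by rewrite [RHS](reindex_inj (addIr (delta_mx 0 i))).
lra.
Qed.

Lemma chain n (h : nat -> 'rV['F_2]_n -> realR) (r : realR) : 0 <= r ->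
  (forall k (hk : (k < n)%N) y, h k.+1 y + h k.+1 (flp (Ordinal hk) y) <= r * h k y) ->
  \sum_y h n y <= (r / 2) ^+ n * \sum_y h 0%N y.
Proof.
move=> r0 H.
suff: forall k, (k <= n)%N -> \sum_y h k y <= (r / 2) ^+ k * \sum_y h 0%N y by apply.
elim=> [|k IH] hk; first by rewrite expr0 mul1r.
have hk' : (k < n)%N := hk.
rewrite (sum_flp (Ordinal hk')) exprS -mulrA.
apply: le_trans (_ : 2^-1 * \sum_y r * h k y <= _).
  apply: ler_wpM2l; first by rewrite invr_ge0.
  by apply: ler_sum => y _; exact: H.
rewrite -mulr_sumr (mulrA 2^-1) (mulrC 2^-1); apply: ler_wpM2l; first by apply: divr_ge0.
exact: IH (ltnW hk').
Qed.

Lemma pr_cases (v : 'F_2) :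
  (pr v = 3^-1 /\ pr (v + 1) = 1 - 3^-1) \/ (pr v = 1 - 3^-1 /\ pr (v + 1) = 3^-1).
Proof. by case: v => [[|[|//]] ?]; rewrite /pr /=; [right|left]. Qed.

Lemma pr_ge0 v : 0 <= pr v.
Proof. rewrite /pr; case: ifP => _; [by rewrite invr_ge0 | lra]. Qed.

Lemma mu_ge0 n k (y : 'rV['F_2]_n) : 0 <= mu k y.
Proof. by apply: prodr_ge0 => j _; apply: pr_ge0. Qed.

Lemma mu_eq n k (hk : (k < n)%N) (y : 'rV['F_2]_n) :
  mu k.+1 y + mu k.+1 (flp (Ordinal hk) y) = mu k y.
Proof.
rewrite mu_step mu_stepf -mulrDr.
by case: (pr_cases (y 0 (Ordinal hk))) => [[-> ->]|[-> ->]]; rewrite ?[_ + (1 - _)]addrC subrK mulr1.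
Qed.

Lemma count_eq n m (a : 'I_n -> 'rV['F_2]_m) b k (hk : (k < n)%N) (y : 'rV['F_2]_n) :
  (#|Cset a b k.+1 y| + #|Cset a b k.+1 (flp (Ordinal hk) y)|)%N = #|Cset a b k y|.
Proof. by rewrite Cset_step Cset_stepf cardsID. Qed.

Definition FF n m (a : 'I_n -> 'rV['F_2]_m) b k (y : 'rV['F_2]_n) : realR :=
  Num.sqrt (#|Cset a b k y|%:R / #|{: 'rV['F_2]_m}|%:R * mu k y).

Lemma FF_step n m (a : 'I_n -> 'rV['F_2]_m) b k (hk : (k < n)%N) (y : 'rV['F_2]_n) :
  FF a b k.+1 y + FF a b k.+1 (flp (Ordinal hk) y) <= rho * FF a b k y.
Proof.
rewrite /FF Cset_step Cset_stepf mu_step mu_stepf.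
have hc := count_dichot a b hk y; simpl in hc.
rewrite -(cardsID [set x | affine_map (a (Ordinal hk)) (b (Ordinal hk)) x == y 0 (Ordinal hk)] (Cset a b k y)).
move: hc.
set c0 := #|_ :&: _|; set c1 := #|_ :\: _|; set N := #|{: 'rV['F_2]_m}|%:R => hc.
set M := mu k y.
have -> : c0%:R / N * (M * pr (y 0 (Ordinal hk))) = c0%:R * (M / N) * pr (y 0 (Ordinal hk)) by ring.
have -> : c1%:R / N * (M * pr (y 0 (Ordinal hk) + 1)) = c1%:R * (M / N) * pr (y 0 (Ordinal hk) + 1) by ring.
have -> : (c0 + c1)%:R / N * M = (c0 + c1)%:R * (M / N) by ring.
apply: bracket => //; last exact: pr_cases.
by apply: divr_ge0; [apply: mu_ge0 | apply: ler0n].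
Qed.


Lemma card_rV n : #|{: 'rV['F_2]_n}|%:R = (2 : realR) ^+ n.
Proof. by rewrite card_mx card_Fp // mul1n natrX. Qed.

Lemma sum_const_rV n (x : realR) : \sum_(y : 'rV['F_2]_n) x = (2 : realR) ^+ n * x.
Proof. by rewrite sumr_const card_mx card_Fp // mul1n -(mulr_natl x (2 ^ n)) natrX. Qed.

Lemma half_pow n : ((1 : realR) / 2) ^+ n * 2 ^+ n = 1.
Proof. have h2 : (2:realR) != 0 by apply: lt0r_neq0; lra. by rewrite -exprMn div1r mulVf // expr1n. Qed.

Lemma Cset0 n m (a : 'I_n -> 'rV['F_2]_m) b (y : 'rV['F_2]_n) : Cset a b 0 y = setT.
Proof. by apply/setP => x; rewrite !inE; apply/forallP => j. Qed.

Lemma mu0 n (y : 'rV['F_2]_n) : mu 0 y = 1.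
Proof. by rewrite /mu big_pred0. Qed.

Lemma N_gt0 m : 0 < #|{: 'rV['F_2]_m}|%:R :> realR.
Proof. by rewrite card_rV exprn_gt0. Qed.

Lemma sumL n m (a : 'I_n -> 'rV['F_2]_m) b :
  (1 : realR) <= \sum_y #|Cset a b n y|%:R / #|{: 'rV['F_2]_m}|%:R.
Proof.
set N := #|{: 'rV['F_2]_m}|%:R.
have := @chain n (fun k y => - (#|Cset a b k y|%:R / N)) 1 ler01.
have hN : N != 0 by rewrite gt_eqF // N_gt0.
have H : forall k (hk : (k < n)%N) y,
   - (#|Cset a b k.+1 y|%:R / N) - (#|Cset a b k.+1 (flp (Ordinal hk) y)|%:R / N)
   <= 1 * - (#|Cset a b k y|%:R / N).
  by move=> k hk y; rewrite -(count_eq a b hk y) natrD mul1r mulrDl opprD.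
move=> /(_ H).
have e0 : \sum_(y : 'rV['F_2]_n) - (#|Cset a b 0 y|%:R / N) = (2:realR)^+n * -1.
  rewrite -sum_const_rV; apply: eq_bigr => y _.
  by rewrite Cset0 cardsT -/N divff.
rewrite e0 mulrA half_pow sumrN; lra.
Qed.

Lemma summu n : 1 <= \sum_(y : 'rV['F_2]_n) mu n y.
Proof.
have := @chain n (fun k y => - mu k y) 1 ler01.
have H : forall k (hk : (k < n)%N) (y : 'rV['F_2]_n),
   - mu k.+1 y - mu k.+1 (flp (Ordinal hk) y) <= 1 * - mu k y.
  by move=> k hk y; rewrite -(mu_eq hk y) mul1r opprD.
move=> /(_ H).
have e0 : \sum_(y : 'rV['F_2]_n) - mu 0 y = (2:realR)^+n * -1.
  by rewrite -sum_const_rV; apply: eq_bigr => y _; rewrite mu0.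
rewrite e0 mulrA half_pow sumrN; lra.
Qed.

Lemma sumFF n m (a : 'I_n -> 'rV['F_2]_m) b :
  \sum_y FF a b n y <= rho ^+ n.
Proof.
have H0 : 0 <= rho by rewrite /rho; lra.
have := @chain n (fun k y => FF a b k y) rho H0 (fun k hk y => FF_step a b hk y).
have hN : #|{: 'rV['F_2]_m}|%:R != 0 :> realR by rewrite gt_eqF // N_gt0.
have e0 : \sum_(y : 'rV['F_2]_n) FF a b 0 y = (2:realR)^+n * 1.
  rewrite -sum_const_rV; apply: eq_bigr => y _.
  by rewrite /FF Cset0 mu0 cardsT divff // mulr1 sqrtr1.
rewrite e0 mulr1 -exprMn.
have -> : rho / 2 * 2 = rho by rewrite /rho; lra.
by [].
Qed.

Lemma pt_bound (u v : realR) : 0 <= u -> 0 <= v ->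
  u + v - 2 * Num.sqrt (u * v) <= `|u - v|.
Proof.
move=> hu hv; rewrite sqrtrM //.
have eu := sqr_sqrtr hu; have ev := sqr_sqrtr hv.
have gu := sqrtr_ge0 u; have gv := sqrtr_ge0 v.
set su := Num.sqrt u in eu gu *; set sv := Num.sqrt v in ev gv *.
rewrite ler_normr; case: (lerP sv su) => h; apply/orP; [left|right]; nra.
Qed.


Theorem theorem7p1 :
  exists c : realR, 0 < c /\
  exists N : nat, forall n : nat, (N <= n)%N ->
  forall (m : nat) (a : 'I_n -> 'rV['F_2]_m) (b : 'I_n -> 'F_2),
    1 - powR 2 (- (c * n%:R)) <= tv_dist (lin_distr a b) (ber_prod n (3^-1)).
Proof.
have l2 : 0 < ln (2:realR) by apply: ln_gt0; lra.
have ri : rho^-1 = 100/99 by rewrite /rho invf_div.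
have lr : 0 < ln (rho^-1) by apply: ln_gt0; rewrite ri; lra.
exists (ln (rho^-1) / ln 2); split; first exact: divr_gt0.
exists 0%N => n _ m a b.
have p2 : powR 2 (ln (rho^-1) / ln 2) = rho^-1.
  rewrite /powR ifF; last by apply/negbTE; apply: lt0r_neq0; lra.
  rewrite divfK ?lnK //; first by rewrite ri posrE; lra.
  exact: lt0r_neq0.
have e : powR 2 (-(ln (rho^-1) / ln 2 * n%:R)) = rho ^+ n.
  by rewrite -mulNr powRrM powRN p2 invrK powR_mulrn // /rho; lra.
rewrite e /tv_dist.
pose N : realR := #|{: 'rV['F_2]_m}|%:R.
have hL : forall y, lin_distr a b y = #|Cset a b n y|%:R / N.
  move=> y; rewrite /lin_distr /Cset.
  have -> : [set x : 'rV['F_2]_m | [forall j : 'I_n, (j < n)%N ==> (affine_map (a j) (b j) x == y 0 j)]]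
    = [set x | [forall i, affine_map (a i) (b i) x == y 0 i]].
    by apply/setP => x; rewrite !inE; apply: eq_forallb => j; rewrite ltn_ord.
  by [].
have hM : forall y, ber_prod n 3^-1 y = mu n y.
  by move=> y; rewrite /mu /ber_prod; apply: eq_bigl => j; rewrite ltn_ord.
rewrite (eq_bigr (fun y => `|#|Cset a b n y|%:R / N - mu n y|)); last first.
  by move=> y _; rewrite hL hM.
have s1 := sumL a b; have s2 := summu n; have s3 := sumFF a b.
apply: le_trans (_ : 2^-1 * \sum_y (#|Cset a b n y|%:R / N + mu n y - 2 * FF a b n y) <= _).
  rewrite big_split big_split /= sumrN -mulr_sumr -/N; lra.
apply: ler_wpM2l; first by rewrite invr_ge0; lra.
apply: ler_sum => y _; apply: pt_bound; last exact: mu_ge0.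
by apply: divr_ge0; [apply: ler0n | apply: ltW; apply: N_gt0].
Qed.
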